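(* Consider Algorithm MWHVC (described in the context) run on a hypergraph $G=(V,E)$ of rank $f$ with nonnegative vertex weights $w$, with parameters $\varepsilon\in(0,1]$, $\beta=\varepsilon/(f+\varepsilon)$ and multiplier $\alpha>1$. For every vertex $v$, the number of $v$-stuck iterations is at most $\alpha/\beta$.
   Context: Let $G=(V,E)$ be a hypergraph: each hyperedge is a nonempty subset of $V$ of size at most $f$ (rank $f$). Vertices have nonnegative weights $w(v)$. For $v\in V$, $E(v)=\{e\in E: v\in e\}$; $\Delta=\max_v |E(v)|\ge 3$. A hyperedge $e$ is covered by $C\subseteq V$ if $e\cap C\neq\emptyset$. The computation is distributed in synchronous rounds on the bipartite network with node set $V\cup E$ and a link between $v$ and $e$ iff $v\in e$. Parameters: $\varepsilon\in(0,1]$, $\beta=\varepsilon/(f+\varepsilon)$, and a multiplier $\alpha>1$. Algorithm MWHVC: Initialize $C\gets\emptyset$ and $E'(v)\gets E(v)$ for every $v$. Iteration $0$: every hyperedge $e$ sets $\mathrm{deal}_0(e)=\beta\cdot\min_{v\in e} w(v)/|E(v)|$ and $\delta_0(e)=\mathrm{deal}_0(e)$. For $i=1,2,\dots$: (a) every vertex $v\notin C$ (not terminated) checks whether $\sum_{e\in E(v)}\delta_{i-1}(e)\ge(1-\beta)w(v)$; if so, $v$ joins $C$, tells every $e\in E'(v)$ that $e$ is covered, and terminates. (b) Every uncovered hyperedge that receives such a message becomes covered, informs all its vertices, and terminates. (c) Every vertex $v\notin C$ that is told $e$ is covered sets $E'(v)\gets E'(v)\setminus\{e\}$; if $E'(v)=\emptyset$,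 $v$ terminates without joining $C$. (d) Every vertex $v\notin C$ sends ''raise'' to all $e\in E'(v)$ if $\sum_{e\in E'(v)}\mathrm{deal}_{i-1}(e)\le(\beta/\alpha)w(v)$, and otherwise sends ''stuck'' to all $e\in E'(v)$. (e) Every uncovered hyperedge $e$ sets $\mathrm{deal}_i(e)=\mathrm{deal}_{i-1}(e)$ if it received some ''stuck'' message, and $\mathrm{deal}_i(e)=\alpha\cdot\mathrm{deal}_{i-1}(e)$ otherwise, and $\delta_i(e)=\delta_{i-1}(e)+\mathrm{deal}_i(e)$. An iteration $i$ is a $v$-stuck iteration if $v$ sends the message ''stuck'' in step (d) of iteration $i$. *)

(* Defs.v *)
From HB Require Import structures.
From mathcomp Require Import all_boot all_order all_algebra.
Set Implicit Arguments. Unset Strict Implicit. Unset Printing Implicit Defensive.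
Import Order.TTheory GRing.Theory Num.Theory.
Local Open Scope ring_scope.

Section MWHVC.
Variables (R : realFieldType) (V : finType) (E : {set {set V}}) (w : V -> R)
  (beta alpha : R).

Definition Ev (v : V) : {set {set V}} := [set e in E | v \in e].

(* Global state after a completed iteration. *)
Record state := State {
  sC : {set V};
  sT : {set V};                 (* terminated vertices (contains C) *)
  sCov : {set {set V}};
  sEp : V -> {set {set V}};
  sDeal : {set V} -> R;
  sDelta : {set V} -> R
}.

Definition deal0 (e : {set V}) : R :=
  let q v := w v / (#|Ev v|)%:R in
  match [pick v in e] with
  | Some v0 => beta * \big[Num.min/q v0]_(v in e) q v
  | None => 0
  end.

(* State after iteration 0. *)
Definition init : state := State set0 set0 set0 Ev deal0 deal0.

(* Iteration i, computed from the state s after iteration i-1. *)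
Definition joiners (s : state) : {set V} :=
  [set v | (v \notin sT s) && ((1 - beta) * w v <= \sum_(e in Ev v) sDelta s e)].
Definition newcov (s : state) : {set {set V}} :=
  [set e in E | (e \notin sCov s) && [exists v in joiners s, e \in sEp s v]].
Definition Ep' (s : state) (v : V) : {set {set V}} :=
  if (v \notin sT s) && (v \notin joiners s) then sEp s v :\: newcov s
  else sEp s v.
Definition informed (s : state) (v : V) : bool := [exists e in newcov s, v \in e].
Definition quitters (s : state) : {set V} :=
  [set v | [&& v \notin sT s, v \notin joiners s, informed s v & Ep' s v == set0]].
Definition T' (s : state) : {set V} := sT s :|: joiners s :|: quitters s.
Definition cov' (s : state) : {set {set V}} := sCov s :|: newcov s.
Definition sends_stuck (s : state) (v : V) : bool :=
  (v \notin T' s) && (beta / alpha * w v < \sum_(e in Ep' s v) sDeal s e).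
Definition gets_stuck (s : state) (e : {set V}) : bool :=
  [exists v, sends_stuck s v && (e \in Ep' s v)].
Definition deal' (s : state) (e : {set V}) : R :=
  if (e \in E) && (e \notin cov' s) then
    (if gets_stuck s e then sDeal s e else alpha * sDeal s e)
  else sDeal s e.
Definition delta' (s : state) (e : {set V}) : R :=
  if (e \in E) && (e \notin cov' s) then sDelta s e + deal' s e
  else sDelta s e.

Definition step (s : state) : state :=
  State (sC s :|: joiners s) (T' s) (cov' s) (Ep' s) (deal' s) (delta' s).

Definition stuck_iter (v : V) (i : nat) : bool :=
  (1 <= i)%N && sends_stuck (iter i.-1 step init) v.

End MWHVC.

(* Main.v *)
Require Import Defs.
From HB Require Import structures.
From mathcomp Require Import all_boot all_order all_algebra.
From mathcomp Require Import ring lra.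
Import Order.TTheory GRing.Theory Num.Theory.
Local Open Scope ring_scope.

Section Proof.
Variables (R : realFieldType) (V : finType) (E : {set {set V}}) (w : V -> R)
  (beta alpha : R).
Hypothesis hw : forall v, 0 <= w v.
Hypothesis hb : 0 < beta.
Hypothesis ha : 1 < alpha.

Definition Inv (s : state R V) :=
  [/\ forall e, 0 <= sDeal s e, forall e, 0 <= sDelta s e,
      forall u, sEp s u \subset Ev E u &
      forall u e, u \notin sT s -> e \in sEp s u -> e \notin sCov s].

Lemma deal0_ge0 e : 0 <= deal0 E w beta e.
Proof.
rewrite /deal0; case: pickP => [v0 _|_] //.
apply: mulr_ge0; first exact: ltW.
apply: (big_ind (fun x => 0 <= x)).
- by apply: divr_ge0.
- by move=> x y hx hy; rewrite le_min hx hy.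
- by move=> i _; apply: divr_ge0.
Qed.

Lemma inv_init : Inv (init E w beta).
Proof.
split => /=; try exact: deal0_ge0.
- by move=> u; apply/subsetP.
- by move=> u e _ _; rewrite inE.
Qed.

Lemma Ep'_uncov s u e : Inv s -> u \notin T' E w beta s ->
  e \in Ep' E w beta s u -> e \notin cov' E w beta s.
Proof.
case=> _ _ _ hd.
rewrite /T' !in_setU !negb_or => /andP [/andP [hT hJ] _].
rewrite /Ep' hT hJ /= inE => /andP [hn he].
by rewrite /cov' hn andbT; exact: hd hT he.
Qed.

Lemma inv_step s : Inv s -> Inv (step E w beta alpha s).
Proof.
move=> I; have I' := I; case: I' => hdeal hdelta hsub hd.
have hdeal' : forall e, 0 <= deal' E w beta alpha s e.
  move=> e; rewrite /deal'; case: ifP => _ //; case: ifP => _ //.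
  apply: mulr_ge0; [exact: le_trans ler01 (ltW ha) | exact: hdeal].
split => //=.
- move=> e; rewrite /delta'; case: ifP => _ //; exact: addr_ge0.
- move=> u; rewrite /Ep'; case: ifP => _ //.
  exact: subset_trans (subsetDl _ _) (hsub u).
- move=> u e; exact: (@Ep'_uncov s u e I).
Qed.

Lemma inv_iter n : Inv (iter n (step E w beta alpha) (init E w beta)).
Proof. elim: n => [|n IH]; first exact: inv_init. by rewrite iterS; apply: inv_step. Qed.

Variable v : V.

Definition Phi (s : state R V) := \sum_(e in Ev E v) sDelta s e.

Lemma phi_ge0 s : Inv s -> 0 <= Phi s.
Proof. by case=> _ hd _ _; apply: sumr_ge0. Qed.

Lemma phi_stuck s : Inv s -> sends_stuck E w beta alpha s v ->
  Phi s + beta / alpha * w v <= Phi (step E w beta alpha s).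
Proof.
move=> I hs; have I' := I; case: I' => hdeal hdelta hsub hd.
have hdeal' : forall e, sDeal s e <= deal' E w beta alpha s e.
  move=> e; rewrite /deal'; case: ifP => _ //; case: ifP => _ //.
  by rewrite -{1}(mul1r (sDeal s e)); apply: ler_wpM2r; [exact: hdeal | exact: ltW].
have hsub' : Ep' E w beta s v \subset Ev E v.
  rewrite /Ep'; case: ifP => _ //; exact: subset_trans (subsetDl _ _) (hsub v).
have hvT : v \notin T' E w beta s by case/andP: hs.
have key : forall e, e \in Ev E v -> sDelta s e +
   (if e \in Ep' E w beta s v then sDeal s e else 0) <= delta' E w beta alpha s e.
  move=> e heE; case: ifP => hep.
  - have hnc := Ep'_uncov _ _ _ I hvT hep.
    have heE' : e \in E by move: heE; rewrite inE => /andP [].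
    rewrite /delta' heE' hnc /=; rewrite lerD2l //.
  - rewrite addr0 /delta'; case: ifP => _ //.
    rewrite lerDl; apply: le_trans (hdeal' e); exact: hdeal.
apply: le_trans (ler_sum _ key).
rewrite big_split /= lerD2l -big_mkcondr /=.
rewrite (eq_bigl (fun e => e \in Ep' E w beta s v)); last first.
  move=> e; apply/andb_idl => he; exact: (subsetP hsub').
by apply: ltW; case/andP: hs.
Qed.

Definition K n := count (fun j => sends_stuck E w beta alpha
   (iter j (step E w beta alpha) (init E w beta)) v) (iota 0 n).

Lemma K_phi n : (K n)%:R * (beta / alpha * w v) <=
   Phi (iter n (step E w beta alpha) (init E w beta)).
Proof.
elim: n => [|n IH]; first by rewrite /K /= mul0r; apply: phi_ge0; exact: inv_init.
rewrite iterS /K -addn1 iotaD count_cat /= add0n addn0 -/(K n).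
have I := inv_iter n.
case hs: (sends_stuck _ _ _ _ _ _).
- rewrite natrD mulrDl mul1r; apply: le_trans (phi_stuck _ I hs).
  by rewrite lerD2r.
- rewrite addn0; apply: le_trans IH _.
  rewrite /Phi; apply: ler_sum => e _.
  rewrite /= /delta'; case: ifP => _ //; rewrite lerDl.
  case: (inv_step _ I) => /= hd _ _ _; exact: hd.
Qed.

Lemma K_bound n : (K n)%:R <= alpha / beta.
Proof.
elim: n => [|n IH]; first by rewrite /K /=; apply: divr_ge0; [exact: le_trans ler01 (ltW ha) | exact: ltW].
rewrite /K -addn1 iotaD count_cat /= add0n addn0 -/(K n).
case hs: (sends_stuck _ _ _ _ _ _); last by rewrite addn0.
set s := iter n (step E w beta alpha) (init E w beta).
have h1 := K_phi n.
have h2 : Phi s < (1 - beta) * w v.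
  case/andP: hs; rewrite /T' !in_setU !negb_or => /andP [/andP [hT hJ] _] _.
  by move: hJ; rewrite inE negb_and hT /= -ltNge.
have h3 := lt_le_trans (le_lt_trans h1 h2) (lexx _).
have hwv : 0 < w v.
  rewrite lt_def hw andbT; apply/eqP => h0; move: h3; rewrite h0 !mulr0 ltxx //.
set k := (K n)%:R in h3 *.
have hk : 0 <= k by rewrite /k ler0n.
have ha0 : 0 < alpha by exact: lt_trans ltr01 ha.
have h4 : k * beta < alpha * (1 - beta).
  have h : k * (beta / alpha) < 1 - beta.
    by rewrite -(ltr_pM2r hwv) -mulrA.
  have -> : k * beta = alpha * (k * (beta / alpha)).
    by rewrite mulrCA (mulrC alpha) divfK // gt_eqF.
  by rewrite ltr_pM2l.
rewrite natrD -/k ler_pdivlMr //. move: ha hb hk h4. rewrite mulr1n. nra.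
Qed.

End Proof.

Theorem mainTheorem5 (R : realFieldType) (V : finType) (E : {set {set V}})
  (f : nat) (w : V -> R) (eps alpha : R)
  (hE0 : set0 \notin E)
  (hrank : forall e, e \in E -> (#|e| <= f)%N)
  (hDelta : (3 <= \max_(v : V) #|Ev E v|)%N)
  (hw : forall v, 0 <= w v)
  (heps : 0 < eps) (heps1 : eps <= 1) (halpha : 1 < alpha) :
  let beta := eps / (f%:R + eps) in
  forall (v : V) (n : nat),
    (count (stuck_iter E w beta alpha v) (iota 1 n))%:R <= alpha / beta.
Proof.
move=> beta v n.
have hb : 0 < beta by rewrite /beta divr_gt0 // ltr_wpDl.
have -> : count (stuck_iter E w beta alpha v) (iota 1 n) = K _ _ E w beta alpha v n.
  have -> : iota 1 n = map (addn 1) (iota 0 n) by rewrite -iotaDl.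
  rewrite /K count_map; apply: eq_count => j.
  by rewrite /stuck_iter.
exact: K_bound.
Qed.
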